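(* Let $G=(V,E)$ be a strongly semiconnected digraph and let $P$ be a principal cycle set of $G$. For each edge $e\in E$ let $w(e)$ be the number of elements of $P$ containing $e$. Then the weights $w(e)$, $e\in E$, are positive integers and make $G$ weight-balanced.
   Context: A digraph $G=(V,E)$ has finite $V$ and $E\subseteq V\times V$ (self-loops allowed). $G$ is strongly semiconnected if, for all $v,w\in V$, the existence of a directed path from $v$ to $w$ implies the existence of one from $w$ to $v$. A cycle is a directed path $v_{i_1},\dots,v_{i_k},v_{i_1}$ with distinct $v_{i_1},\dots,v_{i_k}$ (self-loops are cycles), viewed as a subdigraph. $\mathcal{C}(G)$ is the set of subdigraphs of $G$ that are a single edgeless vertex, a cycle, or a union of pairwise vertex-disjoint cycles. A family generates $G$ if the union of vertex sets is $V$ and of edge sets is $E$. A principal cycle set is a subset of $\mathcal{C}(G)$ generating $G$ of minimum cardinality among such subsets. Weights on edges make $G$ weight-balanced if at each vertex the sum of weights of incoming edges equals the sum of weights of outgoing edges. *)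

(* Defs.v *)
From mathcomp Require Import all_boot.
Set Implicit Arguments. Unset Strict Implicit. Unset Printing Implicit Defensive.

(* A digraph G = (V, E): V is the finite type of vertices (all of it),
   E : {set V * V} the edge set (self-loops allowed).
   A subdigraph is represented as a pair (vertex set, edge set). *)
Notation subdigraph V := ({set V} * {set (V * V)})%type.

Section Digraph.
Variables (V : finType) (E : {set V * V}).

Definition erel : rel V := fun x y => (x, y) \in E.

Definition strongly_semiconnected : Prop :=
  forall v w : V, connect erel v w -> connect erel w v.

(* The cycle v_1, ..., v_k, v_1 given by the nonempty duplicate-free
   sequence s = [:: v_1; ...; v_k], with all edges (v_i, v_{i+1}) and
   (v_k, v_1) in E.  Its vertex and edge sets: *)
Definition cyc_vertices (s : seq V) : {set V} := [set x in s].
Definition cyc_edges (s : seq V) : {set V * V} := [set (x, next s x) | x in s].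

Definition is_cycle_seq (s : seq V) : bool :=
  [&& s != [::], uniq s & cycle erel s].

Definition is_cycle (H : subdigraph V) : Prop :=
  exists s, is_cycle_seq s /\ H = (cyc_vertices s, cyc_edges s).

(* H belongs to C(G): a single edgeless vertex, or the union of a nonempty
   family of pairwise vertex-disjoint cycles (a single cycle being the
   case of a one-element family). *)
Definition in_CG (H : subdigraph V) : Prop :=
  (exists v : V, H = ([set v], set0)) \/
  (exists cs : seq (seq V),
      [/\ cs != [::], all is_cycle_seq cs,
          pairwise (fun s t => [disjoint cyc_vertices s & cyc_vertices t]) cs &
          H = (\bigcup_(s <- cs) cyc_vertices s, \bigcup_(s <- cs) cyc_edges s)]).

Definition generates (P : {set subdigraph V}) : Prop :=
  \bigcup_(H in P) H.1 = [set: V] /\ \bigcup_(H in P) H.2 = E.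

Definition principal_cycle_set (P : {set subdigraph V}) : Prop :=
  [/\ (forall H, H \in P -> in_CG H), generates P &
      forall Q : {set subdigraph V},
        (forall H, H \in Q -> in_CG H) -> generates Q -> #|P| <= #|Q| ].

Definition pcs_weight (P : {set subdigraph V}) (e : V * V) : nat :=
  #|[set H in P | e \in H.2]|.

Definition weight_balanced (w : V * V -> nat) : Prop :=
  forall v : V,
    \sum_(e in E | e.2 == v) w e = \sum_(e in E | e.1 == v) w e.

End Digraph.

(* Main.v *)
Require Import Defs.
From mathcomp Require Import all_boot.

Section Aux.
Variables (V : finType) (E : {set V * V}).

Lemma mem_bigcup_seqE (T : finType) (cs : seq (seq V)) (F : seq V -> {set T}) x :
  (x \in \bigcup_(s <- cs) F s) = has (fun s => x \in F s) cs.
Proof.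
elim: cs => [|a cs IH]; first by rewrite big_nil inE.
by rewrite big_cons in_setU IH.
Qed.

Lemma uniq_owner (cs : seq (seq V)) s t v :
  pairwise (fun s t => [disjoint cyc_vertices s & cyc_vertices t]) cs ->
  s \in cs -> t \in cs -> v \in s -> v \in t -> s = t.
Proof.
elim: cs => [//|a cs IH] /= => /andP[/allP Ha Hp].
rewrite !inE => /orP[/eqP->|Hs] /orP[/eqP->|Ht] // vs vt.
- have H : v \in cyc_vertices t = false.
    by apply: (disjointFr (Ha _ Ht)); rewrite inE.
  by rewrite inE vt in H.
- have H : v \in cyc_vertices s = false.
    by apply: (disjointFr (Ha _ Hs)); rewrite inE.
  by rewrite inE vs in H.
- exact: IH.
Qed.

Lemma local_balance (H : subdigraph V) v :
  in_CG E H ->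
  #|[set e in H.2 | e.2 == v]| = #|[set e in H.2 | e.1 == v]|.
Proof.
case=> [[u ->]|[cs [_ Hall Hpw ->]]] /=.
  by rewrite !(eq_card (B := pred0)) // => e; rewrite !inE.
have [/hasP[s0 s0cs vs0]|Hno] := boolP (has (fun s => v \in s) cs).
  have /andP[_ /andP[us0 _]] := allP Hall _ s0cs.
  rewrite (_ : [set e in _ | e.2 == v] = [set (prev s0 v, v)]);
    last first.
    apply/setP => -[a b]; rewrite !inE mem_bigcup_seqE /=.
    apply/idP/idP.
      case/andP=> /hasP[s scs /imsetP[x xs [-> ->]]] /eqP nv.
      have vs : v \in s by rewrite -nv mem_next.
      have ss0 := uniq_owner _ _ _ _ Hpw scs s0cs vs vs0; subst s.
      by rewrite -nv prev_next.
    case/eqP=> -> ->; rewrite eqxx andbT; apply/hasP; exists s0 => //.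
    apply/imsetP; exists (prev s0 v); first by rewrite mem_prev.
    by rewrite next_prev.
  rewrite (_ : [set e in _ | e.1 == v] = [set (v, next s0 v)]);
    last first.
    apply/setP => -[a b]; rewrite !inE mem_bigcup_seqE /=.
    apply/idP/idP.
      case/andP=> /hasP[s scs /imsetP[x xs [-> ->]]] /eqP nv; subst x.
      by have ss0 := uniq_owner _ _ _ _ Hpw scs s0cs xs vs0; subst s.
    case/eqP=> -> ->; rewrite eqxx andbT; apply/hasP; exists s0 => //.
    by apply/imsetP; exists v.
  by rewrite !cards1.
rewrite !(eq_card (B := pred0)) // => -[a b]; rewrite !inE mem_bigcup_seqE /=;
  apply/negP => /andP[/hasP[s scs /imsetP[x xs [ea eb]]] /eqP nv]; subst a b;
  move/hasP: Hno; apply; exists s => //;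
  first [by rewrite -nv mem_next | by rewrite -nv].
Qed.

Lemma card_as_sum (T : finType) (A : {set T}) (Q : pred T) :
  #|[set x in A | Q x]| = \sum_(x in A) (Q x : nat).
Proof.
rewrite -sum1_card big_mkcond /= [RHS]big_mkcond /=.
by apply: eq_bigr => x _; rewrite !inE; case: (x \in A); case: (Q x).
Qed.

End Aux.

Theorem lemma2p5 (V : finType) (E : {set V * V}) (P : {set subdigraph V}) :
  strongly_semiconnected E ->
  principal_cycle_set E P ->
  (forall e, e \in E -> 0 < pcs_weight P e) /\
  weight_balanced E (pcs_weight P).
Proof.
move=> _ [HC [_ HE] _].
have sub : forall H, H \in P -> H.2 \subset E.
  by move=> H HP; rewrite -HE; apply: (bigcup_max H).
split.
  move=> e; rewrite -HE => /bigcupP[H HP eH].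
  by rewrite /pcs_weight card_gt0; apply/set0Pn; exists H; rewrite inE HP.
move=> v; rewrite /pcs_weight.
have conv : forall (f : V * V -> V) ,
  \sum_(e in E | f e == v) #|[set H in P | e \in H.2]| =
  \sum_(H in P) #|[set e in H.2 | f e == v]|.
  move=> f.
  under eq_bigr do rewrite card_as_sum.
  rewrite exchange_big /=; apply: eq_bigr => H HP.
  rewrite card_as_sum big_mkcondr /= [RHS]big_mkcond /=.
  rewrite big_mkcond /=; apply: eq_bigr => i _.
  have := subsetP (sub H HP) i.
  by case: (i \in H.2); case: (f i == v); case: (i \in E) => // /(_ isT).
rewrite (conv snd) (conv fst).
by apply: eq_bigr => H HP; apply: local_balance (HC H HP).
Qed.
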